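(* Let $V$ be a real vector space of dimension $d$, and $G$ a group of affine-linear transformations of $V$ including all translations. Then the dilation component $\rho_0\colon\mathcal{CB}(V,G)\to\mathcal{CB}(V,G)$ is a group homomorphism, and the dilation components $\rho_1,\ldots,\rho_d\colon[0,\infty)\times\mathcal{CB}(V,G)\to\mathcal{CB}(V,G)$ are group homomorphisms in their second variable.
   Context: $\mathcal{K}(V)$ is the set of nonempty compact convex subsets of $V$ with the Hausdorff metric topology. $\mathcal{CB}(V,G)$ is the quotient (with quotient topology) of the free Hausdorff topological abelian group $\mathbb{Z}\mathcal{K}(V)$ on $\mathcal{K}(V)$ (the Hausdorff topological abelian group with continuous map $X\mapsto[X]$ through which every continuous map from $\mathcal{K}(V)$ to a Hausdorff topological abelian group factors uniquely via a continuous homomorphism) by the closure of the subgroup generated by all $[B\cup C]-[B]-[C]+[B\cap C]$ ($B,C,B\cup C\in\mathcal{K}(V)$) and all $[X]-[gX]$ ($g\in G$); images are still written $[X]$. The dilation map $D\colon[0,\infty)\times\mathcal{CB}(V,G)\to\mathcal{CB}(V,G)$ is the unique continuous map that is a homomorphism in its second variable with $D(\lambda,[X])=[\lambda X]$. The dilation components are the uniquely determined continuous maps $\rho_0\colon\mathcal{CB}(V,G)\to\mathcal{CB}(V,G)$ and $\rho_1,\ldots,\rho_d\colon[0,\infty)\times\mathcal{CB}(V,G)\to\mathcal{CB}(V,G)$ such that each $\rho_i(-,x)$ ($i\geqslant1$) is a semigroup homomorphism $([0,\infty),+)\to\mathcal{CB}(V,G)$ and $D(\lambda,x)=\rho_0(x)+\rho_1(\lambda^1,x)+\cdots+\rho_d(\lambda^d,x)$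 for all $\lambda\in[0,\infty)$, $x\in\mathcal{CB}(V,G)$. *)

(* Defs.v *)
From HB Require Import structures.
From mathcomp Require Import all_boot all_order all_algebra.
From mathcomp Require Import all_classical all_reals all_analysis.
Set Implicit Arguments. Unset Strict Implicit. Unset Printing Implicit Defensive.
Import Order.TTheory GRing.Theory Num.Theory.
Import numFieldNormedType.Exports.
Local Open Scope classical_set_scope.
Local Open Scope ring_scope.

(** The ambient space V = R^d (row vectors, with its normed-space structure). *)
Notation Vsp R d := ('rV[R]_d).

Definition isK (R : realType) (d : nat) (X : set (Vsp R d)) : Prop :=
  X !=set0 /\ compact X /\ convex_set (X : set (convex_lmodType (Vsp R d))).

Definition pt_dist (R : realType) (d : nat) (x : Vsp R d) (Y : set (Vsp R d)) : R :=
  inf [set `|x - y| | y in Y].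

Definition hausdorff_dist (R : realType) (d : nat) (X Y : set (Vsp R d)) : R :=
  Num.max (sup [set pt_dist x Y | x in X]) (sup [set pt_dist y X | y in Y]).

Definition Kcontinuous (R : realType) (d : nat) (T : topologicalType)
    (f : set (Vsp R d) -> T) : Prop :=
  forall X, isK X -> forall U, nbhs (f X) U ->
    exists2 e : R, 0 < e & forall Y, isK Y -> hausdorff_dist X Y < e -> U (f Y).

Definition affine_map (R : realType) (d : nat) (g : Vsp R d -> Vsp R d) : Prop :=
  exists (A : 'M[R]_d) (b : Vsp R d), A \in unitmx /\ forall x, g x = x *m A + b.

Definition affine_group_with_translations (R : realType) (d : nat)
    (G : set (Vsp R d -> Vsp R d)) : Prop :=
  [/\ (forall g, G g -> affine_map g),
      G id,
      (forall g h, G g -> G h -> G (g \o h)),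
      (forall g, G g -> exists2 h, G h & (h \o g = id /\ g \o h = id)) &
      (forall b : Vsp R d, G (fun x => x + b))].

Definition free_haus_top_ab_group (R : realType) (d : nat) (F : topologicalZmodType)
    (iota : set (Vsp R d) -> F) : Prop :=
  [/\ hausdorff_space F,
      Kcontinuous iota &
      forall (A : topologicalZmodType), hausdorff_space A ->
      forall f : set (Vsp R d) -> A, Kcontinuous f ->
        exists phi : {additive F -> A},
          [/\ continuous phi,
              (forall X, isK X -> phi (iota X) = f X) &
              forall phi' : {additive F -> A}, continuous phi' ->
                (forall X, isK X -> phi' (iota X) = f X) -> forall z, phi' z = phi z]].

Definition CB_relations (R : realType) (d : nat) (G : set (Vsp R d -> Vsp R d))
    (F : zmodType) (iota : set (Vsp R d) -> F) : set F :=
  [set z | (exists B C, [/\ isK B, isK C, isK (B `|` C) &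
              z = iota (B `|` C) - iota B - iota C + iota (B `&` C)])
        \/ (exists X g, [/\ isK X, G g & z = iota X - iota (g @` X)])].

Definition gen_subgroup (F : zmodType) (S : set F) : set F :=
  [set z | forall H : set F, H 0 -> (forall x y, H x -> H y -> H (x - y)) ->
             S `<=` H -> H z].

Definition is_CB_quotient (R : realType) (d : nat) (G : set (Vsp R d -> Vsp R d))
    (F : topologicalZmodType) (iota : set (Vsp R d) -> F)
    (Q : topologicalZmodType) (pi : {additive F -> Q}) : Prop :=
  [/\ (forall q : Q, exists z, pi z = q),
      (forall z, pi z = 0 <-> closure (gen_subgroup (CB_relations G iota)) z) &
      (forall U : set Q, open U <-> open (pi @^-1` U))].

Definition dilate (R : realType) (d : nat) (l : R) (X : set (Vsp R d)) : set (Vsp R d) :=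
  [set l *: x | x in X].

(* Main.v *)
Require Import Defs.
From HB Require Import structures.
From mathcomp Require Import all_boot all_order all_algebra.
From mathcomp Require Import all_classical all_reals all_analysis.
Import Order.TTheory GRing.Theory Num.Theory.
From mathcomp Require Import zify.
Import numFieldNormedType.Exports.
Local Open Scope classical_set_scope.
Local Open Scope ring_scope.
Lemma elim_poly (R : realType) (Q : zmodType) (k : nat) (a : nat -> R -> Q) :
  (forall i, (1 <= i <= k)%N -> forall l n, 0 <= l -> a i (n%:R * l) = a i l *+ (n ^ i)) ->
  (forall l, 0 <= l -> \sum_(1 <= i < k.+1) a i l = 0) ->
  exists2 c : nat, (0 < c)%N & forall i, (1 <= i <= k)%N -> forall l, 0 <= l -> a i l *+ c = 0.
Proof.
elim: k a => [|k IH] a Hh Hs.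
  by exists 1%N => // i; case: i.
pose b i l := a i l *+ (2 ^ k.+1 - 2 ^ i).
have Hb : forall l, 0 <= l -> \sum_(1 <= i < k.+1) b i l = 0.
  move=> l l0.
  have e1 : \sum_(1 <= i < k.+2) b i l = 0.
    have -> : \sum_(1 <= i < k.+2) b i l =
       (\sum_(1 <= i < k.+2) a i l) *+ 2 ^ k.+1 - \sum_(1 <= i < k.+2) a i (2%:R * l).
      rewrite -sumrMnl -sumrB big_nat_cond [RHS]big_nat_cond.
      apply: eq_bigr => i /andP[/andP[i1 i2] _].
      rewrite /b Hh ?i1 ?i2 //=.
      by rewrite mulrnBr // leq_pexp2l.
    by rewrite Hs // Hs ?mulr_ge0 // mul0rn subr0.
  by move: e1; rewrite big_nat_recr //= /b subnn mulr0n addr0.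
have Hbh : forall i, (1 <= i <= k)%N -> forall l n, 0 <= l -> b i (n%:R * l) = b i l *+ (n ^ i).
  move=> i /andP[i1 i2] l n l0; rewrite /b Hh ?i1 ?(leq_trans i2) //.
  by rewrite mulrnAC.
have [c' c'0 Hc'] := IH b Hbh Hb.
exists (c' * (2 ^ k.+1)`!)%N; first by rewrite muln_gt0 c'0 fact_gt0.
have Hlow : forall i, (1 <= i <= k)%N -> forall l, 0 <= l -> a i l *+ (c' * (2 ^ k.+1)`!) = 0.
  move=> i ik l l0.
  have /dvdnP[m ->] : ((2 ^ k.+1 - 2 ^ i) %| (2 ^ k.+1)`!)%N.
    apply: dvdn_fact; rewrite leq_subr andbT subn_gt0 ltn_exp2l //.
    by case/andP: ik.
  have -> : (c' * (m * (2 ^ k.+1 - 2 ^ i)) = ((2 ^ k.+1 - 2 ^ i) * c') * m)%N by lia.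
  by rewrite !mulrnA -/(b i l) Hc' // mul0rn.
move=> i /andP[i1]; rewrite leq_eqVlt => /orP[/eqP -> | ik] l l0.
  have := Hs l l0; rewrite big_nat_recr //= => /eqP; rewrite addrC addr_eq0 => /eqP ->.
  rewrite mulNrn -sumrMnl big_nat_cond big1 ?oppr0 //.
  by move=> j /andP[/andP[j1 j2] _]; apply: Hlow; rewrite // j1 -ltnS.
by apply: Hlow; rewrite // i1 -ltnS.
Qed.
Lemma sub3D (Q : zmodType) (A B C D E F : Q) :
  (A + B) - (C + D) - (E + F) = (A - C - E) + (B - D - F).
Proof. by rewrite !opprD (addrACA A) (addrACA (A - C)). Qed.

Lemma cancel3 (Q : zmodType) (a b S Sx Sy : Q) :
  a + b + S = a + Sx + (b + Sy) -> S - Sx - Sy = 0.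
Proof. by rewrite addrACA => /addrI ->; rewrite -addrA -opprD subrr. Qed.

Lemma zero_of_double (Q : zmodType) (r : Q) : r = r + r -> r = 0.
Proof. by move=> h; apply: (@addrI _ r); rewrite addr0 -h. Qed.

Lemma root_ex (R : realType) (s : R) (i : nat) : 0 <= s -> (0 < i)%N ->
  exists2 l : R, 0 <= l & l ^+ i = s.
Proof.
move=> s0 i0; exists (s `^ (i%:R^-1)); first exact: powR_ge0.
rewrite -powR_mulrn ?powR_ge0 // -powRrM mulVf ?powRr1 //.
by rewrite pnatr_eq0 -lt0n.
Qed.

Theorem proposition6p3 (R : realType) (d : nat) (G : set ('rV[R]_d -> 'rV[R]_d))
  (F : topologicalZmodType) (iota : set 'rV[R]_d -> F)
  (Q : topologicalZmodType) (pi : {additive F -> Q})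
  (D : R -> Q -> Q) (rho0 : Q -> Q) (rho : nat -> R -> Q -> Q) :
  affine_group_with_translations G ->
  free_haus_top_ab_group iota ->
  is_CB_quotient G iota pi ->
  (* the dilation map *)
  {within [set p : R * Q | 0 <= p.1], continuous (fun p : R * Q => D p.1 p.2)} ->
  (forall l, 0 <= l -> forall x y, D l (x + y) = D l x + D l y) ->
  (forall l, 0 <= l -> forall X, isK X -> D l (pi (iota X)) = pi (iota (dilate l X))) ->
  (* the dilation components *)
  continuous rho0 ->
  (forall i, (1 <= i <= d)%N ->
     {within [set p : R * Q | 0 <= p.1], continuous (fun p : R * Q => rho i p.1 p.2)}) ->
  (forall i, (1 <= i <= d)%N -> forall x a b, 0 <= a -> 0 <= b ->
     rho i (a + b) x = rho i a x + rho i b x) ->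
  (forall l, 0 <= l -> forall x,
     D l x = rho0 x + \sum_(1 <= i < d.+1) rho i (l ^+ i) x) ->
  (* conclusion *)
  (forall x y, rho0 (x + y) = rho0 x + rho0 y) /\
  (forall i, (1 <= i <= d)%N -> forall l, 0 <= l -> forall x y,
     rho i l (x + y) = rho i l x + rho i l y).
Proof.
move=> _ _ _ _ HDadd _ _ _ Hradd HDsum.
have r0 : forall i, (1 <= i <= d)%N -> forall z, rho i 0 z = 0.
  move=> i hi z; apply: zero_of_double.
  by rewrite -Hradd // addr0.
have Hrho0 : forall x y, rho0 (x + y) = rho0 x + rho0 y.
  move=> x y.
  have hz : forall z, D 0 z = rho0 z.
    move=> z; rewrite HDsum // big_nat_cond big1 ?addr0 //.
    move=> i /andP[/andP[i1 i2] _]; rewrite expr0n.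
    have -> : (i == 0)%N = false by case: i i1 {i2}.
    by rewrite r0 // i1 -ltnS.
  by rewrite -!hz HDadd.
split=> //.
suff H : forall x y i, (1 <= i <= d)%N -> forall l, 0 <= l ->
    rho i l (x + y) = rho i l x + rho i l y.
  by move=> i hi l l0 x y; exact: H.
move=> x y.
pose f i t := rho i t (x + y) - rho i t x - rho i t y.
have fadd : forall i, (1 <= i <= d)%N -> forall a b, 0 <= a -> 0 <= b ->
    f i (a + b) = f i a + f i b.
  move=> i hi a b a0 b0; rewrite /f !Hradd //.
  exact: sub3D.
have fmul : forall i, (1 <= i <= d)%N -> forall m t, 0 <= t ->
    f i (m%:R * t) = f i t *+ m.
  move=> i hi m t t0; rewrite mulr_natl; elim: m => [|m IHm].
    by rewrite !mulr0n /f !r0 // !subr0.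
  by rewrite !mulrS fadd ?mulrn_wge0 // IHm.
pose a i l := f i (l ^+ i).
have Hh : forall i, (1 <= i <= d)%N -> forall l n, 0 <= l ->
    a i (n%:R * l) = a i l *+ (n ^ i).
  move=> i hi l n l0; rewrite /a exprMn -natrX fmul //.
  exact: exprn_ge0.
have Hs : forall l, 0 <= l -> \sum_(1 <= i < d.+1) a i l = 0.
  move=> l l0; rewrite /a /f !sumrB.
  have := HDadd l l0 x y; rewrite !HDsum // Hrho0.
  exact: cancel3.
have [c c0 Hc] := @elim_poly R Q d a Hh Hs.
move=> i hi l l0.
suff : f i l = 0.
  by move/eqP; rewrite /f subr_eq0 subr_eq => /eqP ->; rewrite addrC.
have c0' : (c%:R : R) != 0 by rewrite pnatr_eq0 -lt0n.
have lc0 : 0 <= l / c%:R by rewrite divr_ge0 // ler0n.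
have -> : l = c%:R * (l / c%:R) by rewrite mulrC divfK.
rewrite fmul //.
have i0 : (0 < i)%N by case/andP: hi.
have [l' l'0 <-] := @root_ex R _ i lc0 i0.
exact: Hc.
Qed.
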